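(* In the construction described in the context, the set $L_\infty:=\bigcup_{k\in\mathbb{N}}i_k(L_k)$ is dense in $(P_\infty,\rho_\infty)$.
   Context: Construction. Let $(e_n)$ be the canonical basis of $\ell^1(\mathbb{N})$; $\alpha(t)=t$ on $[0,\frac12]$, $\alpha(t)=1-t$ on $[\frac12,1]$; $S_n=\{te_1+\alpha(t)e_{n+1}:t\in[0,1]\}$; $x_n=(\frac12-\frac1{2^n})e_1$, $x_\infty=\frac12e_1$; $Y=\bigcup_{n\ge1}(2^{-(n+1)}S_n+x_n)\cup\{x_\infty\}$ with the $\ell^1$ metric $\theta$. $Y$ is the image of an arc-length parametrized injective curve $\gamma:[0,1]\to Y$ with $\gamma(0)=0$, $\gamma(1)=x_\infty$. For $r>0$ let $\theta_r(s,t)=r\,\theta(\gamma(s/r),\gamma(t/r))$ on $[0,r]$. Set $P_1=[0,1]$, $\rho_1=\theta_1$, $L_1=\{1\}$. Given $(P_k,\rho_k)$ with $P_k\subset[0,1]^k$ and $L_k\subset P_k$, let $\pi_k$ denote the $k$-th coordinate, choose a countable dense subset $Q_k=\{q_n:n\in\mathbb{N}\}$ (distinct $q_n$) of $P_k\setminus L_k$ with $\pi_k$ injective on $Q_k$ and $0\notin\pi_k(Q_k)$, set $r_n=2^{-(n+k)}$, $d_n=\theta_{r_n}$, and let $P_{k+1}=\{(x,0):x\in P_k\setminus Q_k\}\cup\{(q_n,y):n\in\mathbb{N},y\in[0,r_n]\}\subset[0,1]^{k+1}$ with metric $\rho_{k+1}((x_1,y_1),(x_2,y_2))$ equal to $d_n(y_1,y_2)$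 if $x_1=x_2=q_n$; $d_n(y_1,0)+\rho_k(x_1,x_2)+d_m(0,y_2)$ if $x_1=q_n,x_2=q_m$, $n\ne m$; $d_n(y_1,0)+\rho_k(x_1,x_2)$ if $x_1=q_n$, $x_2\notin Q_k$ (and symmetrically); $\rho_k(x_1,x_2)$ if $x_1,x_2\notin Q_k$. Let $L_{k+1}=(L_k\times\{0\})\cup\{(q_n,r_n):n\in\mathbb{N}\}$. Let $i_k:P_k\to[0,1]^{\mathbb{N}}$, $i_k(x)=(x_1,\dots,x_k,0,0,\dots)$; $\mathcal P_\infty=\bigcup_k i_k(P_k)$ with the metric $\rho_\infty(x,y)=\rho_k(i_k^{-1}x,i_k^{-1}y)$ for $x,y\in i_k(P_k)$; $(P_\infty,\rho_\infty)$ is the completion of $(\mathcal P_\infty,\rho_\infty)$. *)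

(* Defs.v *)
From Stdlib Require Import Reals Lra Arith ClassicalEpsilon.
From Coquelicot Require Import Coquelicot.
Open Scope R_scope.

(* Points of l^1(N) and of [0,1]^N are represented as sequences nat -> R.
   Index convention: the paper's basis vector e_j (j >= 1) / coordinate j
   is the Rocq index j-1. *)
Definition pt := nat -> R.

Definition dec (P : Prop) : bool :=
  if excluded_middle_informative P then true else false.

Definition theta (a b : pt) : R := Series (fun i => Rabs (a i - b i)).

(* canonical basis: e j = e_{j+1} of the paper *)
Definition e (j : nat) : pt := fun i => if Nat.eqb i j then 1 else 0.

Definition alpha (t : R) : R := if Rle_dec t (1/2) then t else 1 - t.

Definition xn (n : nat) : pt := fun i => (1/2 - / 2 ^ n) * e 0 i.
Definition xinf : pt := fun i => (1/2) * e 0 i.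

Definition piece (n : nat) (t : R) : pt :=
  fun i => xn n i + / 2 ^ (n + 1) * (t * e 0 i + alpha t * e n i).

(* gamma : the arc-length parametrized injective curve onto Y with
   gamma(0) = 0, gamma(1) = x_infty.  The piece 2^{-(n+1)} S_n + x_n has
   l^1-length 2^{-n} and is traversed for s in [1 - 2^{-(n-1)}, 1 - 2^{-n}]. *)
Definition gamma (s : R) : pt :=
  if Rlt_dec s 1 then
    let n := epsilon (inhabits 1%nat)
               (fun n => (1 <= n)%nat /\ 1 - / 2 ^ (n - 1) <= s < 1 - / 2 ^ n) in
    piece n (2 ^ n * (s - (1 - / 2 ^ (n - 1))))
  else xinf.

Definition theta_r (r s t : R) : R := r * theta (gamma (s / r)) (gamma (t / r)).

(* The choice data: q m n is the paper's q_{n+1} at stage k = m+1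
   (Q_k = {q_n : n in N}).  Stage m (Rocq) is stage k = m+1 (paper); points
   of P_k are encoded by i_k, i.e. as sequences vanishing at indices >= k. *)
Definition choice_data := nat -> nat -> pt.

(* r_n = 2^{-(n+k)} with paper n = n0+1, k = m+1 *)
Definition rr (m n0 : nat) : R := / 2 ^ (n0 + m + 2).

Definition trunc (c : nat) (x : pt) : pt := fun j => if Nat.ltb j c then x j else 0.

Definition inQ (q : choice_data) (m : nat) (z : pt) : Prop := exists n, z = q m n.
Definition idxQ (q : choice_data) (m : nat) (z : pt) : nat :=
  epsilon (inhabits 0%nat) (fun n => z = q m n).

Definition P1 (x : pt) : Prop := 0 <= x 0%nat <= 1 /\ forall j, (1 <= j)%nat -> x j = 0.
Definition rho1 (x y : pt) : R := theta_r 1 (x 0%nat) (y 0%nat).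
Definition L1 (x : pt) : Prop := x 0%nat = 1 /\ forall j, (1 <= j)%nat -> x j = 0.

Definition Pnext (q : choice_data) (m : nat) (P : pt -> Prop) (x : pt) : Prop :=
  (forall j, (m + 1 < j)%nat -> x j = 0) /\
  ((x (m + 1)%nat = 0 /\ P (trunc (m + 1) x) /\ ~ inQ q m (trunc (m + 1) x)) \/
   (exists n, trunc (m + 1) x = q m n /\ 0 <= x (m + 1)%nat <= rr m n)).

Definition rhonext (q : choice_data) (m : nat) (rho : pt -> pt -> R) (x y : pt) : R :=
  let x' := trunc (m + 1) x in
  let y' := trunc (m + 1) y in
  let x2 := x (m + 1)%nat in
  let y2 := y (m + 1)%nat in
  let nx := idxQ q m x' in
  let ny := idxQ q m y' in
  if dec (inQ q m x') then
    if dec (inQ q m y') then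
      if dec (x' = y') then theta_r (rr m nx) x2 y2
      else theta_r (rr m nx) x2 0 + rho x' y' + theta_r (rr m ny) 0 y2
    else theta_r (rr m nx) x2 0 + rho x' y'
  else
    if dec (inQ q m y') then rho x' y' + theta_r (rr m ny) 0 y2
    else rho x' y'.

Definition Lnext (q : choice_data) (m : nat) (L : pt -> Prop) (x : pt) : Prop :=
  (forall j, (m + 1 < j)%nat -> x j = 0) /\
  ((x (m + 1)%nat = 0 /\ L (trunc (m + 1) x)) \/
   (exists n, trunc (m + 1) x = q m n /\ x (m + 1)%nat = rr m n)).

Fixpoint stage (q : choice_data) (m : nat)
  : (pt -> Prop) * (pt -> pt -> R) * (pt -> Prop) :=
  match m with
  | O => (P1, rho1, L1)
  | S m' =>
      let '(P, rho, L) := stage q m' in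
      (Pnext q m' P, rhonext q m' rho, Lnext q m' L)
  end.

Definition Pk (q : choice_data) (m : nat) : pt -> Prop := fst (fst (stage q m)).
Definition rhok (q : choice_data) (m : nat) : pt -> pt -> R := snd (fst (stage q m)).
Definition Lk (q : choice_data) (m : nat) : pt -> Prop := snd (stage q m).

Definition admissible (q : choice_data) : Prop :=
  forall m : nat,
    (forall n, Pk q m (q m n) /\ ~ Lk q m (q m n)) /\
    (forall n n', q m n = q m n' -> n = n') /\
    (forall x, Pk q m x -> ~ Lk q m x ->
       forall eps, 0 < eps -> exists n, rhok q m x (q m n) < eps) /\
    (forall n n', q m n m = q m n' m -> q m n = q m n') /\
    (forall n, q m n m <> 0).

Definition Pinf_pre (q : choice_data) (x : pt) : Prop := exists m, Pk q m x.
Definition rho_inf (q : choice_data) (x y : pt) : R :=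
  rhok q (epsilon (inhabits 0%nat) (fun m => Pk q m x /\ Pk q m y)) x y.
Definition Linf (q : choice_data) (x : pt) : Prop := exists m, Lk q m x.

(* The completion (P_infty, rho_infty): Cauchy sequences in calP_infty,
   at distance lim_j rho_infty(u_j, v_j); calP_infty embeds as constant
   sequences. *)
Definition cauchy_in (q : choice_data) (u : nat -> pt) : Prop :=
  (forall j, Pinf_pre q (u j)) /\
  forall eps, 0 < eps -> exists N, forall i j, (N <= i)%nat -> (N <= j)%nat ->
    rho_inf q (u i) (u j) < eps.

Definition completion_dist (q : choice_data) (u v : nat -> pt) : R :=
  real (Lim_seq (fun j => rho_inf q (u j) (v j))).

Definition embed (x : pt) : nat -> pt := fun _ => x.

Definition dense_in_completion (q : choice_data) (S : pt -> Prop) : Prop :=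
  forall u, cauchy_in q u -> forall eps, 0 < eps ->
    exists l, S l /\ completion_dist q (embed l) u < eps.

(* Main.v *)
Require Import Defs.
From Stdlib Require Import Reals Lra Lia ClassicalEpsilon FunctionalExtensionality.
From Coquelicot Require Import Coquelicot.
Open Scope R_scope.

Definition fin (a : nat -> R) := exists N, forall i, (N <= i)%nat -> a i = 0.

Lemma ex_series_zero : ex_series (fun _ : nat => 0).
Proof.
  exists 0. apply is_series_Reals. intros eps Heps. exists 0%nat. intros n _.
  rewrite sum_cte. unfold R_dist. rewrite Rmult_0_l, Rminus_0_r, Rabs_R0. lra.
Qed.

Lemma ex_series_fin a : fin a -> ex_series a.
Proof.
  intros [N HN]. apply (ex_series_incr_n a N).
  apply ex_series_ext with (fun _ => 0). intros k. rewrite HN; auto. lia.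
  apply ex_series_zero.
Qed.

Lemma Series_zero : Series (fun _ : nat => 0) = 0.
Proof.
  rewrite (Series_ext _ (fun n => 0 * 0)) by (intros; ring).
  rewrite (Series_scal_l 0 (fun _ => 0)). ring.
Qed.

Lemma Series_nonneg' a : (forall n, 0 <= a n) -> ex_series a -> 0 <= Series a.
Proof.
  intros H He. rewrite <- Series_zero. apply Series_le; auto. intros n; specialize (H n); lra.
Qed.

Lemma gamma_fin s : fin (gamma s).
Proof.
  unfold gamma. destruct (Rlt_dec s 1).
  - set (n := epsilon _ _). clearbody n. set (t := _ * _). clearbody t.
    exists (S n). intros i Hi. unfold piece, xn, e.
    assert (H1 : Nat.eqb i n = false) by (apply Nat.eqb_neq; lia).
    assert (H2 : Nat.eqb i 0 = false) by (apply Nat.eqb_neq; lia).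
    rewrite H1, H2. ring.
  - exists 1%nat. intros i Hi. unfold xinf, e. destruct i; [lia|]. simpl. ring.
Qed.

Lemma fin_absdiff a b : fin a -> fin b -> fin (fun i => Rabs (a i - b i)).
Proof.
  intros [N HN] [M HM]. exists (N + M)%nat. intros i Hi.
  rewrite HN, HM by lia. rewrite Rminus_0_r, Rabs_R0. auto.
Qed.

Definition G s t := theta (gamma s) (gamma t).

Lemma G_nonneg s t : 0 <= G s t.
Proof.
  apply Series_nonneg'. intros; apply Rabs_pos.
  apply ex_series_fin, fin_absdiff; apply gamma_fin.
Qed.

Lemma G_self s : G s s = 0.
Proof.
  unfold G, theta. rewrite <- Series_zero. apply Series_ext. intros.
  rewrite Rminus_diag_eq, Rabs_R0; auto.
Qed.

Lemma G_sym s t : G s t = G t s.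
Proof.
  unfold G, theta. apply Series_ext. intros. apply Rabs_minus_sym.
Qed.

Lemma G_tri s t u : G s u <= G s t + G t u.
Proof.
  unfold G, theta.
  assert (E1 := ex_series_fin _ (fin_absdiff _ _ (gamma_fin s) (gamma_fin t))).
  assert (E2 := ex_series_fin _ (fin_absdiff _ _ (gamma_fin t) (gamma_fin u))).
  rewrite <- Series_plus by auto.
  apply Series_le.
  - intros n. split. apply Rabs_pos.
    replace (gamma s n - gamma u n) with ((gamma s n - gamma t n) + (gamma t n - gamma u n)) by ring.
    apply Rabs_triang.
  - apply (ex_series_plus _ _ E1 E2).
Qed.

Lemma Tr_nonneg r a b : 0 <= r -> 0 <= theta_r r a b.
Proof. intros. unfold theta_r. apply Rmult_le_pos; auto. apply G_nonneg. Qed.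
Lemma Tr_self r a : theta_r r a a = 0.
Proof. unfold theta_r. fold (G (a/r) (a/r)). rewrite G_self. ring. Qed.
Lemma Tr_sym r a b : theta_r r a b = theta_r r b a.
Proof. unfold theta_r. fold (G (a/r) (b/r)). fold (G (b/r) (a/r)). rewrite G_sym. ring. Qed.
Lemma Tr_tri r a b c : 0 <= r -> theta_r r a c <= theta_r r a b + theta_r r b c.
Proof. intros. unfold theta_r. fold (G (a/r) (c/r)). fold (G (a/r) (b/r)). fold (G (b/r) (c/r)).
  rewrite <- Rmult_plus_distr_l. apply Rmult_le_compat_l; auto. apply G_tri. Qed.

Lemma rr_pos m n : 0 < rr m n.
Proof. unfold rr. apply Rinv_0_lt_compat, pow_lt. lra. Qed.

Lemma Pk_S q m : Pk q (S m) = Pnext q m (Pk q m).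
Proof. unfold Pk; simpl. destruct (stage q m) as [[P rho] L]. reflexivity. Qed.
Lemma rhok_S q m : rhok q (S m) = rhonext q m (rhok q m).
Proof. unfold rhok; simpl. destruct (stage q m) as [[P rho] L]. reflexivity. Qed.
Lemma Lk_S q m : Lk q (S m) = Lnext q m (Lk q m).
Proof. unfold Lk; simpl. destruct (stage q m) as [[P rho] L]. reflexivity. Qed.

Definition pmetric (rho : pt -> pt -> R) :=
  (forall x, rho x x = 0) /\ (forall x y, rho x y = rho y x) /\
  (forall x y, 0 <= rho x y) /\ (forall x y z, rho x z <= rho x y + rho y z).

Ltac casedec := unfold dec; repeat match goal with
  |- context [excluded_middle_informative ?P] => destruct (excluded_middle_informative P) end.

Lemma rhonext_pm q m rho : pmetric rho -> pmetric (rhonext q m rho).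
Proof.
  intros (Hs & Hy & Hn & Ht). split; [|split; [|split]].
  - intros x. unfold rhonext. cbv zeta. casedec; try (exfalso; congruence).
    apply Tr_self. apply Hs.
  - intros x y. unfold rhonext. cbv zeta.
    set (x' := trunc (m+1) x). set (y' := trunc (m+1) y).
    set (a := x (m+1)%nat). set (b := y (m+1)%nat). clearbody x' y' a b.
    casedec; try (exfalso; congruence); try subst; try apply Tr_sym;
      rewrite ?(Hy x' y'), ?(Tr_sym _ a 0), ?(Tr_sym _ b 0); ring.
  - intros x y. unfold rhonext. cbv zeta.
    set (x' := trunc (m+1) x). set (y' := trunc (m+1) y).
    set (a := x (m+1)%nat). set (b := y (m+1)%nat). clearbody x' y' a b.
    pose proof (Hn x' y').
    pose proof (Tr_nonneg (rr m (idxQ q m x')) a 0 (Rlt_le _ _ (rr_pos _ _))).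
    pose proof (Tr_nonneg (rr m (idxQ q m y')) 0 b (Rlt_le _ _ (rr_pos _ _))).
    pose proof (Tr_nonneg (rr m (idxQ q m x')) a b (Rlt_le _ _ (rr_pos _ _))).
    casedec; lra.
  - intros x y z. unfold rhonext. cbv zeta.
    set (x' := trunc (m+1) x). set (y' := trunc (m+1) y). set (z' := trunc (m+1) z).
    set (a := x (m+1)%nat). set (b := y (m+1)%nat). set (c := z (m+1)%nat).
    clearbody x' y' z' a b c.
    set (rx := rr m (idxQ q m x')). set (ry := rr m (idxQ q m y')). set (rz := rr m (idxQ q m z')).
    pose proof (Hn x' y'). pose proof (Hn y' z'). pose proof (Hn x' z').
    pose proof (Hn y' x'). pose proof (Hn z' y'). 
    pose proof (Ht x' y' z'). pose proof (Hs x'). pose proof (Hs y'). pose proof (Hs z').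
    pose proof (Hy x' y'). pose proof (Hy y' z'). pose proof (Hy x' z').
  pose proof (Tr_nonneg rx a a (Rlt_le _ _ (rr_pos _ _))).
  pose proof (Tr_nonneg rx a b (Rlt_le _ _ (rr_pos _ _))).
  pose proof (Tr_nonneg rx a c (Rlt_le _ _ (rr_pos _ _))).
  pose proof (Tr_nonneg rx a 0 (Rlt_le _ _ (rr_pos _ _))).
  pose proof (Tr_nonneg rx b a (Rlt_le _ _ (rr_pos _ _))).
  pose proof (Tr_nonneg rx b b (Rlt_le _ _ (rr_pos _ _))).
  pose proof (Tr_nonneg rx b c (Rlt_le _ _ (rr_pos _ _))).
  pose proof (Tr_nonneg rx b 0 (Rlt_le _ _ (rr_pos _ _))).
  pose proof (Tr_nonneg rx c a (Rlt_le _ _ (rr_pos _ _))).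
  pose proof (Tr_nonneg rx c b (Rlt_le _ _ (rr_pos _ _))).
  pose proof (Tr_nonneg rx c c (Rlt_le _ _ (rr_pos _ _))).
  pose proof (Tr_nonneg rx c 0 (Rlt_le _ _ (rr_pos _ _))).
  pose proof (Tr_nonneg rx 0 a (Rlt_le _ _ (rr_pos _ _))).
  pose proof (Tr_nonneg rx 0 b (Rlt_le _ _ (rr_pos _ _))).
  pose proof (Tr_nonneg rx 0 c (Rlt_le _ _ (rr_pos _ _))).
  pose proof (Tr_nonneg rx 0 0 (Rlt_le _ _ (rr_pos _ _))).
  pose proof (Tr_sym rx 0 b).
  pose proof (Tr_sym rx a b).
  pose proof (Tr_sym rx b c).
  pose proof (Tr_sym rx a c).
  pose proof (Tr_sym rx 0 a).
  pose proof (Tr_sym rx 0 c).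
  pose proof (Tr_tri rx a 0 c (Rlt_le _ _ (rr_pos _ _))).
  pose proof (Tr_tri rx a b 0 (Rlt_le _ _ (rr_pos _ _))).
  pose proof (Tr_tri rx 0 b c (Rlt_le _ _ (rr_pos _ _))).
  pose proof (Tr_tri rx a b c (Rlt_le _ _ (rr_pos _ _))).
  pose proof (Tr_nonneg ry a a (Rlt_le _ _ (rr_pos _ _))).
  pose proof (Tr_nonneg ry a b (Rlt_le _ _ (rr_pos _ _))).
  pose proof (Tr_nonneg ry a c (Rlt_le _ _ (rr_pos _ _))).
  pose proof (Tr_nonneg ry a 0 (Rlt_le _ _ (rr_pos _ _))).
  pose proof (Tr_nonneg ry b a (Rlt_le _ _ (rr_pos _ _))).
  pose proof (Tr_nonneg ry b b (Rlt_le _ _ (rr_pos _ _))).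
  pose proof (Tr_nonneg ry b c (Rlt_le _ _ (rr_pos _ _))).
  pose proof (Tr_nonneg ry b 0 (Rlt_le _ _ (rr_pos _ _))).
  pose proof (Tr_nonneg ry c a (Rlt_le _ _ (rr_pos _ _))).
  pose proof (Tr_nonneg ry c b (Rlt_le _ _ (rr_pos _ _))).
  pose proof (Tr_nonneg ry c c (Rlt_le _ _ (rr_pos _ _))).
  pose proof (Tr_nonneg ry c 0 (Rlt_le _ _ (rr_pos _ _))).
  pose proof (Tr_nonneg ry 0 a (Rlt_le _ _ (rr_pos _ _))).
  pose proof (Tr_nonneg ry 0 b (Rlt_le _ _ (rr_pos _ _))).
  pose proof (Tr_nonneg ry 0 c (Rlt_le _ _ (rr_pos _ _))).
  pose proof (Tr_nonneg ry 0 0 (Rlt_le _ _ (rr_pos _ _))).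
  pose proof (Tr_sym ry 0 b).
  pose proof (Tr_sym ry a b).
  pose proof (Tr_sym ry b c).
  pose proof (Tr_sym ry a c).
  pose proof (Tr_sym ry 0 a).
  pose proof (Tr_sym ry 0 c).
  pose proof (Tr_tri ry a 0 c (Rlt_le _ _ (rr_pos _ _))).
  pose proof (Tr_tri ry a b 0 (Rlt_le _ _ (rr_pos _ _))).
  pose proof (Tr_tri ry 0 b c (Rlt_le _ _ (rr_pos _ _))).
  pose proof (Tr_tri ry a b c (Rlt_le _ _ (rr_pos _ _))).
  pose proof (Tr_nonneg rz a a (Rlt_le _ _ (rr_pos _ _))).
  pose proof (Tr_nonneg rz a b (Rlt_le _ _ (rr_pos _ _))).
  pose proof (Tr_nonneg rz a c (Rlt_le _ _ (rr_pos _ _))).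
  pose proof (Tr_nonneg rz a 0 (Rlt_le _ _ (rr_pos _ _))).
  pose proof (Tr_nonneg rz b a (Rlt_le _ _ (rr_pos _ _))).
  pose proof (Tr_nonneg rz b b (Rlt_le _ _ (rr_pos _ _))).
  pose proof (Tr_nonneg rz b c (Rlt_le _ _ (rr_pos _ _))).
  pose proof (Tr_nonneg rz b 0 (Rlt_le _ _ (rr_pos _ _))).
  pose proof (Tr_nonneg rz c a (Rlt_le _ _ (rr_pos _ _))).
  pose proof (Tr_nonneg rz c b (Rlt_le _ _ (rr_pos _ _))).
  pose proof (Tr_nonneg rz c c (Rlt_le _ _ (rr_pos _ _))).
  pose proof (Tr_nonneg rz c 0 (Rlt_le _ _ (rr_pos _ _))).
  pose proof (Tr_nonneg rz 0 a (Rlt_le _ _ (rr_pos _ _))).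
  pose proof (Tr_nonneg rz 0 b (Rlt_le _ _ (rr_pos _ _))).
  pose proof (Tr_nonneg rz 0 c (Rlt_le _ _ (rr_pos _ _))).
  pose proof (Tr_nonneg rz 0 0 (Rlt_le _ _ (rr_pos _ _))).
  pose proof (Tr_sym rz 0 b).
  pose proof (Tr_sym rz a b).
  pose proof (Tr_sym rz b c).
  pose proof (Tr_sym rz a c).
  pose proof (Tr_sym rz 0 a).
  pose proof (Tr_sym rz 0 c).
  pose proof (Tr_tri rz a 0 c (Rlt_le _ _ (rr_pos _ _))).
  pose proof (Tr_tri rz a b 0 (Rlt_le _ _ (rr_pos _ _))).
  pose proof (Tr_tri rz 0 b c (Rlt_le _ _ (rr_pos _ _))).
  pose proof (Tr_tri rz a b c (Rlt_le _ _ (rr_pos _ _))).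
    unfold rx, ry, rz in *. clear rx ry rz.
    casedec; try (exfalso; congruence); try subst; lra.
Qed.

Lemma rhok_pm q m : pmetric (rhok q m).
Proof.
  induction m.
  - unfold rhok; simpl. unfold rho1. split; [|split; [|split]]; intros.
    apply Tr_self. apply Tr_sym. apply Tr_nonneg; lra. apply Tr_tri; lra.
  - rewrite rhok_S. apply rhonext_pm. auto.
Qed.

Lemma Pk_supp q m x : Pk q m x -> forall j, (m < j)%nat -> x j = 0.
Proof.
  destruct m.
  - unfold Pk; simpl. intros [_ H] j Hj. apply H. lia.
  - rewrite Pk_S. intros [H _] j Hj. apply H. lia.
Qed.

Lemma trunc_id m x : (forall j, (m < j)%nat -> x j = 0) -> trunc (m+1) x = x.
Proof.
  intros H. apply functional_extensionality. intros j. unfold trunc.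
  destruct (Nat.ltb_spec j (m+1)). auto. symmetry. apply H. lia.
Qed.

Lemma Pk_mono q m x : Pk q m x -> Pk q (S m) x.
Proof.
  intros Hx. pose proof (Pk_supp q m x Hx) as Hs. rewrite Pk_S. split.
  - intros j Hj. apply Hs. lia.
  - rewrite (trunc_id m x Hs). destruct (classic (inQ q m x)) as [[n Hn]|Hn].
    + right. exists n. split; auto. rewrite Hs by lia. pose proof (rr_pos m n). lra.
    + left. split; auto. apply Hs; lia.
Qed.

Lemma rhok_S_eq q m x y : Pk q m x -> Pk q m y -> rhok q (S m) x y = rhok q m x y.
Proof.
  intros Hx Hy. pose proof (Pk_supp q m x Hx) as Hsx. pose proof (Pk_supp q m y Hy) as Hsy.
  rewrite rhok_S. unfold rhonext. cbv zeta.
  rewrite (trunc_id m x Hsx), (trunc_id m y Hsy), (Hsx (m+1)%nat), (Hsy (m+1)%nat) by lia.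
  destruct (rhok_pm q m) as (Hs & _).
  casedec; rewrite ?Tr_self; try subst; rewrite ?Hs; ring.
Qed.

Lemma Pk_le q m M x : (m <= M)%nat -> Pk q m x -> Pk q M x.
Proof. induction 1; auto. intros; apply Pk_mono; auto. Qed.

Lemma rhok_le q m M x y : (m <= M)%nat -> Pk q m x -> Pk q m y -> rhok q M x y = rhok q m x y.
Proof.
  induction 1; auto. intros. rewrite rhok_S_eq; auto; apply Pk_le with m; auto.
Qed.

Lemma rho_inf_eq q M x y : Pk q M x -> Pk q M y -> rho_inf q x y = rhok q M x y.
Proof.
  intros Hx Hy. unfold rho_inf.
  set (m0 := epsilon _ _).
  assert (H : Pk q m0 x /\ Pk q m0 y).
  { unfold m0. apply epsilon_spec. exists M; auto. }
  clearbody m0. destruct H as [H1 H2].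
  rewrite <- (rhok_le q m0 (Nat.max m0 M)); auto; [|apply Nat.le_max_l].
  rewrite <- (rhok_le q M (Nat.max m0 M)); auto. apply Nat.le_max_r.
Qed.

Lemma lim_bound (f : nat -> R) N c eps :
  (forall j, (N <= j)%nat -> f j <= c) -> c < eps -> 0 < eps -> real (Lim_seq f) < eps.
Proof.
  intros H Hc He.
  assert (Rbar_le (Lim_seq f) (Lim_seq (fun _ => c))).
  { apply Lim_seq_le_loc. exists N. auto. }
  rewrite Lim_seq_const in H0.
  destruct (Lim_seq f); simpl in *; try tauto; lra.
Qed.

Lemma rho_inf_tri q M x y z : Pk q M x -> Pk q M y -> Pk q M z ->
  rho_inf q x z <= rho_inf q x y + rho_inf q y z.
Proof.
  intros. rewrite !(rho_inf_eq q M) by auto.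
  destruct (rhok_pm q M) as (_ & _ & _ & Ht). apply Ht.
Qed.

Theorem proposition4p10 (q : choice_data) (Hq : admissible q) :
  dense_in_completion q (Linf q).
Proof.
  intros u [Hu HC] eps Heps.
  destruct (HC (eps/4)) as [N HN]; [lra|].
  destruct (Hu N) as [m0 Hm0]. set (x := u N) in *.
  set (C := G 1 0). assert (HC0 : 0 <= C) by apply G_nonneg.
  destruct (pow_lt_1_zero (1/2)) with (y := eps / 4 / (C + 1)) as [K HK].
  { rewrite Rabs_pos_eq; lra. }
  { apply Rdiv_lt_0_compat; lra. }
  set (M := (m0 + K + 1)%nat).
  assert (HPx : Pk q M x) by (apply Pk_le with m0; auto; unfold M; lia).
  assert (HxM : x M = 0) by (apply (Pk_supp q m0); auto; unfold M; lia).
  assert (Hgen : forall l mm, Pk q mm l -> Pk q mm x -> rho_inf q l x < eps / 2 ->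
             completion_dist q (embed l) u < eps).
  { intros l mm Hl Hx Hlx. unfold completion_dist, embed.
    apply lim_bound with N (eps/2 + eps/4); try lra.
    intros j Hj. destruct (Hu j) as [mj Hmj].
    set (K' := Nat.max mm mj).
    assert (Hle1 : (mm <= K')%nat) by apply Nat.le_max_l.
    assert (Hle2 : (mj <= K')%nat) by apply Nat.le_max_r.
    pose proof (rho_inf_tri q K' l x (u j) (Pk_le _ _ _ _ Hle1 Hl) (Pk_le _ _ _ _ Hle1 Hx)
                  (Pk_le _ _ _ _ Hle2 Hmj)).
    pose proof (HN N j (le_n _) Hj). fold x in H0. lra. }
  destruct (classic (Lk q M x)) as [HL|HnL].
  - exists x. split. exists M; auto.
    apply (Hgen x M HPx HPx). rewrite (rho_inf_eq q M) by auto.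
    destruct (rhok_pm q M) as (Hs & _). rewrite Hs. lra.
  - destruct (Hq M) as (Hq1 & Hq2 & Hd & _ & Hq5).
    destruct (Hd x HPx HnL (eps/4)) as [n Hn]; [lra|].
    set (z := q M n) in *.
    assert (Hz : Pk q M z) by apply Hq1.
    set (l := fun j => if (j <? M+1)%nat then z j else if (j =? M+1)%nat then rr M n else 0).
    assert (Htl : trunc (M+1) l = z).
    { apply functional_extensionality. intros j. unfold trunc, l.
      destruct (Nat.ltb_spec j (M+1)); auto. symmetry. apply (Pk_supp q M); auto. lia. }
    assert (Hl2 : l (M+1)%nat = rr M n).
    { unfold l. rewrite (proj2 (Nat.ltb_ge _ _)) by lia. rewrite Nat.eqb_refl. auto. }
    assert (Hl0 : forall j, (M + 1 < j)%nat -> l j = 0).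
    { intros j Hj. unfold l. rewrite (proj2 (Nat.ltb_ge _ _)) by lia.
      rewrite (proj2 (Nat.eqb_neq _ _)) by lia. auto. }
    assert (HPl : Pk q (S M) l).
    { rewrite Pk_S. split; auto. right. exists n. split; auto. rewrite Hl2.
      pose proof (rr_pos M n). lra. }
    exists l. split.
    { exists (S M). rewrite Lk_S. split; auto. right. exists n. auto. }
    apply (Hgen l (S M) HPl (Pk_mono _ _ _ HPx)).
    rewrite (rho_inf_eq q (S M)) by (auto; apply Pk_mono; auto).
    rewrite rhok_S. unfold rhonext. cbv zeta.
    rewrite Htl, (trunc_id M x (Pk_supp q M x HPx)), Hl2.
    assert (HQz : inQ q M z) by (exists n; auto).
    assert (HQx : ~ inQ q M x).
    { intros [n' Hn']. apply (Hq5 n'). rewrite <- Hn'. auto. }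
    assert (Hidx : idxQ q M z = n).
    { unfold idxQ. apply Hq2. symmetry. apply (epsilon_spec (inhabits 0%nat) (fun n0 => z = q M n0)).
      exists n; auto. }
    rewrite Hidx.
    unfold dec. destruct (excluded_middle_informative (inQ q M z)); [|tauto].
    destruct (excluded_middle_informative (inQ q M x)); [tauto|].
    destruct (rhok_pm q M) as (_ & Hy & _).
    rewrite (Hy z x).
    assert (Hr : theta_r (rr M n) (rr M n) 0 < eps / 4).
    { unfold theta_r. pose proof (rr_pos M n).
      replace (rr M n / rr M n) with 1 by (field; lra).
      replace (0 / rr M n) with 0 by (field; lra). change (theta (gamma 1) (gamma 0)) with C.
      assert (rr M n <= (1/2)^M).
      { unfold rr. unfold Rdiv. rewrite Rmult_1_l, pow_inv.
        apply Rinv_le_contravar. apply pow_lt; lra.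
        apply Rle_pow. lra. lia. }
      specialize (HK M ltac:(unfold M; lia)).
      rewrite Rabs_pos_eq in HK by (apply pow_le; lra).
      assert (HK' : (1/2)^M * (C+1) < eps/4).
      { apply Rmult_lt_compat_r with (r := C+1) in HK; [|lra].
        unfold Rdiv in HK at 2. rewrite Rmult_assoc, Rinv_l, Rmult_1_r in HK by lra. exact HK. }
      assert (rr M n * C <= (1/2)^M * C) by (apply Rmult_le_compat_r; lra).
      assert (0 <= (1/2)^M) by (apply pow_le; lra).
      rewrite Rmult_plus_distr_l, Rmult_1_r in HK'. lra. }
    lra.
Qed.
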